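(* Let $G$ be a finitely generated group and $S$ a finite generating set of $G$ closed under inverses, and let $\Delta(n)=\Delta_S(n)$ be as defined in the context. Then $\Delta(n)\le \lceil n/3\rceil$ for all $n\ge 1$. Moreover, if there is $N$ such that $\Delta(n)<\lceil n/3\rceil$ for all $n\ge N$, then $G$ is finitely presented and satisfies an exponential isoperimetric inequality: there is a finite presentation $\langle S\mid \mathcal R\rangle$ of $G$ and a constant $c$ such that every word $w$ in $S$ of length $n$ representing the identity of $G$ is freely equivalent to a product of at most $c^n$ conjugates of elements of $\mathcal R$ and their inverses.
   Context: Let $G$ be a finitely generated group, $S$ a finite generating set closed under inverses, and $\Gamma$ the Cayley diagram (there is an edge labelled $s$ from $g$ to $gs$ for $g\in G$, $s\in S$). The word metric $d(g,g')$ is the length of a shortest word in $S$ representing $g^{-1}g'$. A path of length $n\ge1$ in $\Gamma$ is a sequence $g_0,\dots,g_n$ of group elements with an edge of $\Gamma$ from each $g_{i-1}$ to $g_i$; it is a cycle if $g_n=g_0$. A (diagonal) triangulation of a circle in the plane is obtained by distinguishing one or more points on the circle and joining some of them by chords such that (1) no two chords meet in the interior of the circle, (2) the interior is divided into triangles, (3) each arc of the circle between two neighbouring distinguished points is one side of a triangle; circles with one, two or three distinguished points count as triangulated with no chords. A triangulation of a cycle $g_0,\dots,g_n$ in $\Gamma$ is a triangulation of a circle with distinguished points $p_1,\dots,p_n$, labelled $g_1,\dots,g_n$ in counterclockwise order. The length of a chord with endpoints $p_i,p_j$ is $d(g_i,g_j)$. A $k$-triangulation is one in which all chords have length at most $k$.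 $\Delta(n)=\Delta_S(n)$ is the least $k$ such that every cycle in $\Gamma$ of length at most $n$ has a $k$-triangulation (so $\Delta(n)=0$ for $1\le n\le3$). $\lceil x\rceil$ is the least integer not less than $x$. *)

(* Defs.v *)
From Stdlib Require Import List Arith Relations.
Import ListNotations.

Record group := Group {
  carrier :> Type;
  mul : carrier -> carrier -> carrier;
  inv : carrier -> carrier;
  one : carrier;
  mulA : forall x y z, mul x (mul y z) = mul (mul x y) z;
  mul1g : forall x, mul one x = x;
  mulg1 : forall x, mul x one = x;
  mulVg : forall x, mul (inv x) x = one;
  mulgV : forall x, mul x (inv x) = one
}.

Arguments mul {g}. Arguments inv {g}. Arguments one {g}.

Section Defs.
Variable G : group.
Variable S : list G.

Definition inS (s : G) : Prop := In s S.

Definition prodw (w : list G) : G := fold_right mul one w.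

Definition dist_le (g g' : G) (k : nat) : Prop :=
  exists w : list G, Forall inS w /\ length w <= k /\ prodw w = mul (inv g) g'.

(** labels g_1, ..., g_n of the path starting at g_0 = g and reading w *)
Fixpoint labels (g : G) (w : list G) : list G :=
  match w with
  | [] => []
  | s :: w' => mul g s :: labels (mul g s) w'
  end.

(** [ktri k l] : the circle whose distinguished points, in counterclockwise
    order, carry the labels [l] has a k-triangulation.  The arc from the last
    point back to the first is the "base" side; it lies in a unique triangle
    with apex [z], which splits the disc into two triangulated sub-discs.
    Sides of that triangle which are not arcs are chords, of length <= k. *)
Inductive ktri (k : nat) : list G -> Prop :=
| ktri_small l : length l <= 3 -> ktri k l
| ktri_split x p z q y :
    ktri k (x :: p ++ [z]) ->
    ktri k (z :: q ++ [y]) ->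
    (p <> [] -> dist_le x z k) ->
    (q <> [] -> dist_le z y k) ->
    ktri k (x :: p ++ z :: q ++ [y]).

(** [Delta_le n k] : every cycle of length at most n in the Cayley diagram
    has a k-triangulation; i.e. Delta_S(n) <= k. *)
Definition Delta_le (n k : nat) : Prop :=
  forall (g0 : G) (w : list G),
    1 <= length w <= n -> Forall inS w -> mul g0 (prodw w) = g0 ->
    ktri k (labels g0 w).

Definition letter := (G * bool)%type.
Definition linv (a : letter) : letter := (fst a, negb (snd a)).
Definition winv (u : list letter) : list letter := rev (map linv u).
Definition leval (a : letter) : G := if snd a then fst a else inv (fst a).
Definition evalw (u : list letter) : G := fold_right mul one (map leval u).
Definition letters_in_S (u : list letter) : Prop := Forall (fun a => inS (fst a)) u.

Inductive fred : list letter -> list letter -> Prop :=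
| fred_step u a v : fred (u ++ a :: linv a :: v) (u ++ v).
Definition freeeq : list letter -> list letter -> Prop :=
  clos_refl_sym_trans (list letter) fred.

Definition conj_prod (L : list (list letter * list letter * bool)) : list letter :=
  flat_map (fun t : list letter * list letter * bool =>
     let u := fst (fst t) in let r := snd (fst t) in
     u ++ (if snd t then r else winv r) ++ winv u) L.

Definition conseq_le (R : list (list letter)) (w : list letter) (m : nat) : Prop :=
  exists L : list (list letter * list letter * bool),
    length L <= m /\
    Forall (fun t : list letter * list letter * bool =>
              letters_in_S (fst (fst t)) /\ In (snd (fst t)) R) L /\
    freeeq w (conj_prod L).

End Defs.

Arguments Delta_le {G}. Arguments conseq_le {G}. Arguments letters_in_S {G}.
Arguments evalw {G}. Arguments prodw {G}. Arguments inS {G}.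

Definition ceil3 (n : nat) : nat := (n + 2) / 3.

(* Main.v *)
Require Import Defs.
From Stdlib Require Import List Arith Lia Relations Classical.
Import ListNotations.

Arguments dist_le {G}. Arguments ktri {G}. Arguments labels {G}.

Lemma inv_uniq {G : group} (a b : G) : mul a b = one -> inv a = b.
Proof. intro H. rewrite <- (mulg1 G (inv a)), <- H, mulA, mulVg, mul1g. reflexivity. Qed.

Lemma invinv {G : group} (a : G) : inv (inv a) = a.
Proof. apply inv_uniq. apply mulVg. Qed.

Lemma inv_mul {G : group} (a b : G) : inv (mul a b) = mul (inv b) (inv a).
Proof. apply inv_uniq. rewrite mulA, <- (mulA _ a b), mulgV, mulg1, mulgV. reflexivity. Qed.

Lemma fold_mul {G : group} (l : list G) (z : G) :
  fold_right mul z l = mul (fold_right mul one l) z.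
Proof. induction l; simpl. now rewrite mul1g. now rewrite IHl, mulA. Qed.

Lemma prodw_app {G : group} (u v : list G) : prodw (u ++ v) = mul (prodw u) (prodw v).
Proof. unfold prodw. rewrite fold_right_app. apply fold_mul. Qed.

Lemma length_labels {G : group} (g : G) w : length (labels g w) = length w.
Proof. revert g; induction w; simpl; auto. Qed.

Lemma labels_app {G : group} (g : G) u v :
  labels g (u ++ v) = labels g u ++ labels (mul g (prodw u)) v.
Proof.
  revert g; induction u as [|s u IH]; intro g; simpl.
  - now rewrite mulg1.
  - rewrite IH. f_equal. f_equal. f_equal. now rewrite mulA.
Qed.

Lemma labels_snoc {G : group} (g : G) u t :
  labels g (u ++ [t]) = labels g u ++ [mul g (prodw (u ++ [t]))].
Proof.
  rewrite labels_app. simpl. f_equal. f_equal.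
  rewrite prodw_app. simpl. now rewrite mulg1, mulA.
Qed.

Lemma dist_mono {G : group} (S : list G) a b k k' :
  dist_le S a b k -> k <= k' -> dist_le S a b k'.
Proof. intros [w [H1 [H2 H3]]] H. exists w; repeat split; auto; lia. Qed.

Lemma ktri_mono {G : group} (S : list G) k k' l :
  ktri S k l -> k <= k' -> ktri S k' l.
Proof.
  intros H Hk; induction H.
  - now constructor.
  - constructor 2; auto; intro Hn; eapply dist_mono; eauto.
Qed.

Lemma lsplit {G : group} (w : list G) : forall (h : G) l1 a l2,
  h :: labels h w = l1 ++ a :: l2 ->
  exists w1 w2, w = w1 ++ w2 /\ length w1 = length l1 /\ a = mul h (prodw w1)
    /\ l2 = labels a w2.
Proof.
  induction w as [|s w IH]; intros h l1 a l2 E.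
  - destruct l1 as [|c l1]; simpl in E.
    + injection E; intros; subst. exists [], []. simpl. repeat split; auto.
      now rewrite mulg1.
    + injection E; intros E2 _. destruct l1; discriminate.
  - destruct l1 as [|c l1]; simpl in E.
    + injection E; intros; subst. exists [], (s :: w). simpl. repeat split; auto.
      now rewrite mulg1.
    + injection E; intros E2 _.
      destruct (IH _ _ _ _ E2) as [w1 [w2 [H1 [H2 [H3 H4]]]]].
      exists (s :: w1), w2. simpl. repeat split; auto.
      * now rewrite H1.
      * now rewrite H3, mulA.
Qed.

Definition Pfwd {G : group} (S : list G) (l : list G) : Prop :=
  forall l1 a M b l3, l = l1 ++ a :: M ++ b :: l3 -> dist_le S a b (length M + 1).

Lemma Pfwd_labels {G : group} (S : list G) (h : G) w :
  Forall (inS S) w -> Pfwd S (h :: labels h w).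
Proof.
  intros Hw l1 a M b l3 E.
  destruct (lsplit w h l1 a _ E) as [w1 [w2 [H1 [_ [H3 H4]]]]].
  assert (E2 : a :: labels a w2 = (a :: M) ++ b :: l3) by (rewrite <- H4; reflexivity).
  destruct (lsplit w2 a _ b _ E2) as [v1 [v2 [K1 [K2 [K3 _]]]]].
  exists v1. subst. rewrite Forall_app in Hw. destruct Hw as [_ Hw].
  rewrite Forall_app in Hw. destruct Hw as [Hw _].
  repeat split; auto. simpl in K2; lia.
  rewrite mulA, mulVg, mul1g. reflexivity.
Qed.

Lemma Pfwd_tail {G : group} (S : list G) l1 l2 : Pfwd S (l1 ++ l2) -> Pfwd S l2.
Proof. intros H L1 a M b L3 E. apply (H (l1 ++ L1) a M b L3). subst. now rewrite <- app_assoc. Qed.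

Lemma Pfwd_prefix {G : group} (S : list G) l1 l2 : Pfwd S (l1 ++ l2) -> Pfwd S l1.
Proof. intros H L1 a M b L3 E. apply (H L1 a M b (L3 ++ l2)). subst.
  rewrite <- app_assoc. simpl. rewrite <- app_assoc. reflexivity. Qed.

Lemma fan {G : group} (S : list G) k : forall n l, length l <= n ->
  Pfwd S l -> length l <= k + 1 -> ktri S k l.
Proof.
  induction n; intros l Hn HP Hk.
  - constructor. lia.
  - destruct (le_lt_dec (length l) 3) as [Hs|Hs]. constructor; auto.
    destruct l as [|x [|z t]]; simpl in Hs; try lia.
    destruct (exists_last (l := t)) as [q [y Et]]. { intro; subst; simpl in Hs; lia. }
    subst t.
    apply (ktri_split G S k x [] z q y).
    + constructor. simpl; lia.
    + apply IHn. simpl in *. lia. apply (Pfwd_tail S [x]). exact HP. simpl in *; lia.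
    + intro H; now elim H.
    + intro. eapply dist_mono. apply (HP [x] z q y []). reflexivity.
      simpl in Hk. rewrite length_app in Hk. simpl in Hk. lia.
Qed.

Lemma split_at {A} (l : list A) n : n <= length l -> exists l1 l2, l = l1 ++ l2 /\ length l1 = n.
Proof. intro H. exists (firstn n l), (skipn n l). split. now rewrite firstn_skipn.
  rewrite length_firstn. lia. Qed.

Lemma fan2 {G : group} (S : list G) k l :
  Pfwd S l -> length l <= 2 * k + 1 -> ktri S k l.
Proof.
  intros HP Hk.
  destruct (le_lt_dec (length l) (k + 1)). { eapply fan; eauto. }
  destruct (split_at l (k+1)) as [l1 [l2 [E H1]]]. lia.
  destruct l1 as [|x l1]. simpl in H1; lia.
  destruct (exists_last (l := l1)) as [p [z Ep]]. { intro; subst; simpl in H1; lia. }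
  destruct (exists_last (l := l2)) as [q [y Eq]].
  { intro; subst. rewrite app_nil_r in l0. lia. }
  subst l1 l2.
  assert (El : l = x :: p ++ z :: q ++ [y]). { rewrite E. simpl. now rewrite <- app_assoc. }
  assert (Hl : length l = length p + length q + 3).
  { rewrite El. simpl. rewrite length_app. simpl. rewrite length_app. simpl. lia. }
  simpl in H1. rewrite length_app in H1. simpl in H1.
  rewrite El in HP |- *.
  apply ktri_split.
  - eapply fan. reflexivity.
    + apply (Pfwd_prefix S _ (q ++ [y])). simpl. rewrite <- app_assoc. exact HP.
    + simpl. rewrite length_app. simpl. lia.
  - eapply fan. reflexivity.
    + apply (Pfwd_tail S (x :: p)). exact HP.
    + simpl. rewrite length_app. simpl. lia.
  - intro. eapply dist_mono. apply (HP [] x p z (q ++ [y])). reflexivity. lia.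
  - intro. eapply dist_mono. apply (HP (x :: p) z q y []). reflexivity. lia.
Qed.
Lemma ceil3_facts n : 3 * ceil3 n <= n + 2 /\ n + 2 < 3 * ceil3 n + 3.
Proof.
  unfold ceil3. pose proof (Nat.div_mod (n+2) 3 ltac:(lia)).
  pose proof (Nat.mod_upper_bound (n+2) 3 ltac:(lia)). lia.
Qed.

Lemma prodw_invrev {G : group} (u : list G) : prodw (map inv (rev u)) = inv (prodw u).
Proof. induction u as [|a u IH]; simpl. symmetry; apply inv_uniq, mul1g.
  rewrite map_app, prodw_app, IH, inv_mul. simpl. now rewrite mulg1. Qed.

Lemma part1_cycle {G : group} (S : list G) (HSinv : forall s, In s S -> In (inv s) S) (g0 : G) (w : list G) :
  1 <= length w -> Forall (inS S) w -> mul g0 (prodw w) = g0 ->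
  ktri S (ceil3 (length w)) (labels g0 w).
Proof.
  intros H1 Hf Hc.
  set (n := length w) in *.
  destruct (le_lt_dec n 3). { constructor. now rewrite length_labels. }
  set (m := ceil3 n). pose proof (ceil3_facts n) as Hm. fold m in Hm.
  destruct (split_at w (n - m + 1)) as [w1 [w2 [E Hl1]]]. lia.
  assert (Hl2 : length w2 = m - 1). { assert (length w = n) by reflexivity.
    rewrite E, length_app in H. lia. }
  destruct w1 as [|s1 w1']. simpl in Hl1; lia.
  destruct (exists_last (l := w1')) as [w1m [t Et]]. { intro Hx; rewrite Hx in Hl1; simpl in Hl1. idtac. lia. }
  destruct (exists_last (l := w2)) as [w2m [t2 Et2]]. { intro Hx; rewrite Hx in Hl2; simpl in Hl2; lia. }
  set (w1 := s1 :: w1') in *.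
  set (z := mul g0 (prodw w1)).
  assert (El : labels g0 w1 = mul g0 s1 :: labels (mul g0 s1) w1m ++ [z]).
  { unfold z, w1. rewrite Et. change (s1 :: w1m ++ [t]) with ((s1 :: w1m) ++ [t]).
    rewrite labels_snoc. reflexivity. }
  assert (Er : labels z w2 = labels z w2m ++ [mul z (prodw w2)]).
  { rewrite Et2. rewrite labels_snoc. reflexivity. }
  assert (EL : labels g0 w = mul g0 s1 :: labels (mul g0 s1) w1m ++ z :: labels z w2m ++ [mul z (prodw w2)]).
  { rewrite E, labels_app. fold z. rewrite El, Er. simpl. now rewrite <- app_assoc. }
  rewrite E, Forall_app in Hf. destruct Hf as [Hf1 Hf2].
  rewrite EL. apply ktri_split.
  - rewrite <- El. apply fan2.
    + apply (Pfwd_tail S [g0]). apply Pfwd_labels. auto.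
    + rewrite length_labels. lia.
  - rewrite <- Er. eapply fan. reflexivity. apply Pfwd_labels. auto.
    simpl. rewrite length_labels. lia.
  - intros _. exists (inv s1 :: map inv (rev w2)). repeat split.
    + constructor. apply HSinv. inversion Hf1; auto.
      apply Forall_map. apply Forall_rev. eapply Forall_impl; [|exact Hf2]. intros a Ha. apply HSinv. exact Ha.
    + simpl. rewrite length_map, length_rev. lia.
    + assert (Hz : mul z (prodw w2) = g0).
      { unfold z. rewrite <- mulA, <- prodw_app, <- E. exact Hc. }
      change (prodw (inv s1 :: map inv (rev w2))) with (mul (inv s1) (prodw (map inv (rev w2)))).
      rewrite prodw_invrev, inv_mul. rewrite <- Hz at 1. rewrite inv_mul.
      rewrite <- !mulA. rewrite mulVg, mulg1. reflexivity.
  - intros _. eapply dist_mono.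
    apply (Pfwd_labels S z w2 Hf2 [] z (labels z w2m) (mul z (prodw w2)) []).
    simpl. now rewrite Er.
    rewrite Et2 in Hl2. rewrite length_labels. rewrite length_app in Hl2. simpl in Hl2. lia.
Qed.

Lemma part1 {G : group} (S : list G) (HSinv : forall s, In s S -> In (inv s) S) : forall n, 1 <= n -> Delta_le S n (ceil3 n).
Proof.
  intros n Hn g0 w [H1 H2] Hf Hc.
  eapply ktri_mono. apply part1_cycle; auto.
  unfold ceil3. apply Nat.div_le_mono; lia.
Qed.

Ltac lnorm := repeat (progress (rewrite <- ?app_assoc, <- ?app_comm_cons)); try reflexivity.

Lemma find {G : group} (S : list G) k l : ktri S k l -> 1 <= k -> 2 * k + 2 <= length l ->
  exists L1 a M b L3, l = L1 ++ a :: M ++ b :: L3 /\ dist_le S a b k /\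
    k <= length M /\ length M + 1 <= 2 * k.
Proof.
  intros H Hk. induction H as [l Hs | x p z q y H1 IH1 H2 IH2 D1 D2]; intro Hl.
  - lia.
  - simpl in Hl. rewrite length_app in Hl. simpl in Hl. rewrite length_app in Hl. simpl in Hl.
    destruct (le_lt_dec (k+1) (length p + 1)).
    + destruct (le_lt_dec (length p + 1) (2 * k)).
      * exists [], x, p, z, (q ++ [y]). repeat split; auto; try lia.
        apply D1. intro; subst; simpl in *; lia.
      * destruct IH1 as [L1 [a [M [b [L3 [E [Hd HM]]]]]]].
        simpl; rewrite length_app; simpl; lia.
        exists L1, a, M, b, (L3 ++ q ++ [y]). repeat split; auto; try lia.
        transitivity ((x :: p ++ [z]) ++ q ++ [y]). simpl; now rewrite <- app_assoc.
        rewrite E. lnorm.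
    + destruct (le_lt_dec (length q + 1) (2 * k)).
      * exists (x :: p), z, q, y, []. repeat split; auto; try lia.
        apply D2. intro; subst; simpl in *; lia.
      * destruct IH2 as [L1 [a [M [b [L3 [E [Hd HM]]]]]]].
        simpl; rewrite length_app; simpl; lia.
        exists (x :: p ++ L1), a, M, b, L3. repeat split; auto; try lia.
        rewrite E. simpl. now rewrite <- app_assoc.
Qed.

Lemma linv_inv {G : group} (a : letter G) : linv G (linv G a) = a.
Proof. destruct a as [s b]; unfold linv; simpl; now rewrite Bool.negb_involutive. Qed.

Lemma winv_app {G : group} (u v : list (letter G)) : winv G (u ++ v) = winv G v ++ winv G u.
Proof. unfold winv. now rewrite map_app, rev_app_distr. Qed.

Lemma winv_inv {G : group} (u : list (letter G)) : winv G (winv G u) = u.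
Proof. unfold winv. rewrite map_rev, rev_involutive, map_map.
  erewrite map_ext. apply map_id. apply linv_inv. Qed.

Lemma winv_cons {G : group} a (u : list (letter G)) : winv G (a :: u) = winv G u ++ [linv G a].
Proof. reflexivity. Qed.

Lemma letters_winv {G : group} (S : list G) u : letters_in_S S u -> letters_in_S S (winv G u).
Proof. intro H. unfold letters_in_S, winv. apply Forall_rev, Forall_map.
  eapply Forall_impl; [|exact H]. intros [s b]; simpl; auto. Qed.

Lemma letters_app {G : group} (S : list G) u v : letters_in_S S u -> letters_in_S S v -> letters_in_S S (u ++ v).
Proof. intros; apply Forall_app; auto. Qed.

Lemma evalw_app {G : group} (u v : list (letter G)) : evalw (u ++ v) = mul (evalw u) (evalw v).
Proof. unfold evalw. rewrite map_app. apply (prodw_app (map (leval G) u)). Qed.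

Lemma evalw_winv {G : group} (u : list (letter G)) : evalw (winv G u) = inv (evalw u).
Proof.
  induction u as [|a u IH]. simpl. symmetry; apply inv_uniq, mul1g.
  rewrite winv_cons, evalw_app, IH. change (evalw (a :: u)) with (mul (leval G a) (evalw u)).
  rewrite inv_mul. f_equal. unfold evalw. simpl. rewrite mulg1.
  destruct a as [s [|]]; simpl; auto. symmetry; apply invinv.
Qed.

Lemma fred_ctx {G : group} (a b x y : list (letter G)) : fred G a b -> fred G (x ++ a ++ y) (x ++ b ++ y).
Proof.
  intro H; destruct H as [u c v].
  replace (x ++ (u ++ c :: linv G c :: v) ++ y) with ((x ++ u) ++ c :: linv G c :: (v ++ y))
    by (now rewrite <- !app_assoc).
  replace (x ++ (u ++ v) ++ y) with ((x ++ u) ++ (v ++ y)) by (now rewrite <- !app_assoc).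
  constructor.
Qed.

Lemma freeeq_ctx {G : group} (a b x y : list (letter G)) : freeeq G a b -> freeeq G (x ++ a ++ y) (x ++ b ++ y).
Proof.
  intro H; induction H.
  - apply rst_step, fred_ctx; auto.
  - apply rst_refl.
  - now apply rst_sym.
  - eapply rst_trans; eauto.
Qed.

Lemma freeeq_app {G : group} (a a' b b' : list (letter G)) : freeeq G a a' -> freeeq G b b' -> freeeq G (a ++ b) (a' ++ b').
Proof.
  intros H1 H2. eapply rst_trans.
  - pose proof (freeeq_ctx a a' [] b H1). simpl in H. exact H.
  - pose proof (freeeq_ctx b b' a' [] H2). rewrite !app_nil_r in H. exact H.
Qed.

Lemma freeeq_cancel {G : group} (c : list (letter G)) : freeeq G (c ++ winv G c) [].
Proof.
  induction c as [|a c IH]. apply rst_refl.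
  rewrite winv_cons. simpl. rewrite app_assoc.
  eapply rst_trans.
  - pose proof (freeeq_ctx _ _ [a] [linv G a] IH). simpl in H. exact H.
  - apply rst_step. apply (fred_step G [] a []).
Qed.

Lemma freeeq_del {G : group} (c x y : list (letter G)) : freeeq G (x ++ (c ++ winv G c) ++ y) (x ++ y).
Proof. pose proof (freeeq_ctx _ _ x y (freeeq_cancel c)). exact H. Qed.

Lemma conj_prod_app {G : group} L1 L2 : conj_prod G (L1 ++ L2) = conj_prod G L1 ++ conj_prod G L2.
Proof. unfold conj_prod. apply flat_map_app. Qed.

Lemma conseq_app {G : group} (S : list G) R v1 v2 m1 m2 :
  conseq_le S R v1 m1 -> conseq_le S R v2 m2 -> conseq_le S R (v1 ++ v2) (m1 + m2).
Proof.
  intros [L1 [A1 [B1 C1]]] [L2 [A2 [B2 C2]]]. exists (L1 ++ L2). repeat split.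
  rewrite length_app; lia. apply Forall_app; auto.
  rewrite conj_prod_app. apply freeeq_app; auto.
Qed.

Lemma conseq_mono {G : group} (S : list G) R v m m' :
  conseq_le S R v m -> m <= m' -> conseq_le S R v m'.
Proof. intros [L [A [B C]]] H. exists L. repeat split; auto; lia. Qed.

Lemma conseq_freeeq {G : group} (S : list G) R v v' m :
  conseq_le S R v m -> freeeq G v v' -> conseq_le S R v' m.
Proof. intros [L [A [B C]]] H. exists L. repeat split; auto. eapply rst_trans. apply rst_sym. exact H. exact C. Qed.

Lemma conseq_conj {G : group} (S : list G) R v m c :
  letters_in_S S c -> conseq_le S R v m -> conseq_le S R (winv G c ++ v ++ c) m.
Proof.
  intros Hc [L [A [B C]]].
  exists (map (fun t => (winv G c ++ fst (fst t), snd (fst t), snd t)) L). repeat split.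
  - now rewrite length_map.
  - apply Forall_map. eapply Forall_impl; [|exact B]. intros [[u r] b] [H1 H2]; simpl in *.
    split; auto. apply letters_app; auto. apply letters_winv; auto.
  - eapply rst_trans. apply (freeeq_ctx _ _ (winv G c) c C).
    clear A B C. induction L as [|[[u r] b] L IH].
    + simpl. pose proof (freeeq_cancel (winv G c)). rewrite winv_inv in H. exact H.
    + simpl. rewrite winv_app, winv_inv.
      set (r' := if b then r else winv G r).
      set (T := conj_prod G L). set (T' := conj_prod G (map (fun t => (winv G c ++ fst (fst t), snd (fst t), snd t)) L)).
      fold T T' in IH.
      replace (winv G c ++ ((u ++ r' ++ winv G u) ++ T) ++ c) with
        ((winv G c ++ u ++ r' ++ winv G u) ++ T ++ c) by lnorm.
      eapply rst_trans.
      * apply rst_sym. apply (freeeq_del c (winv G c ++ (u ++ r' ++ winv G u)) (T ++ c)).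
      * match goal with |- clos_refl_sym_trans _ _ ?A ?B =>
          assert (EA : A = (winv G c ++ u ++ r' ++ winv G u ++ c) ++ (winv G c ++ T ++ c) ++ [])
            by (rewrite app_nil_r; lnorm);
          assert (EB : B = (winv G c ++ u ++ r' ++ winv G u ++ c) ++ T' ++ [])
            by (rewrite app_nil_r; lnorm);
          rewrite EA, EB end.
        apply freeeq_ctx. exact IH.
Qed.

Lemma pow2_pos x : 1 <= 2 ^ x.
Proof. induction x; simpl; lia. Qed.

Lemma Delta_mono {G : group} (S : list G) n k k' : Delta_le S n k -> k <= k' -> Delta_le S n k'.
Proof. intros H Hk g0 w H1 H2 H3. eapply ktri_mono; eauto. Qed.

Lemma conseq_base {G : group} (S : list G) R u : In u R -> conseq_le S R u 1.
Proof.
  intro H. exists [([], u, true)]. split. simpl; lia. split.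
  repeat constructor. auto. simpl. rewrite !app_nil_r. apply rst_refl.
Qed.

Lemma key {G : group} (S : list G) (HSinv : forall s, In s S -> In (inv s) S)
  R N0 (HR : forall u, letters_in_S S u -> length u <= N0 -> evalw u = one -> In u R)
  (Hyp : forall n, N0 < n -> exists k, 1 <= k /\ 3 * k + 1 <= n /\ Delta_le S n k) :
  forall n u, length u <= n -> letters_in_S S u -> evalw u = one -> conseq_le S R u (2 ^ length u).
Proof.
  induction n as [|n IH]; intros u Hl Hu Hev.
  all: destruct (le_lt_dec (length u) N0) as [Hs|Hb].
  1,3: eapply conseq_mono; [apply conseq_base; apply HR; auto|apply pow2_pos].
  lia.
  destruct (le_lt_dec (length u) n). { apply IH; auto. }
  assert (Hn : length u = Datatypes.S n) by lia.
  set (sg := map (leval G) u).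
  assert (Hsg : Forall (inS S) sg).
  { apply Forall_map. eapply Forall_impl; [|exact Hu]. intros [s [|]]; simpl; auto. apply HSinv. }
  destruct (Hyp (Datatypes.S n)) as [k [Hk1 [Hk2 HD]]]. lia.
  assert (Kt : ktri S k (labels one sg)).
  { apply HD. unfold sg; rewrite length_map; lia. exact Hsg. rewrite mul1g. exact Hev. }
  destruct (find S k _ Kt Hk1) as [L1 [a [M [b [L3 [E [Hd [HM1 HM2]]]]]]]].
  { rewrite length_labels. unfold sg; rewrite length_map. lia. }
  destruct Hd as [u0 [Hu0f [Hu0l Hu0p]]].
  assert (E1 : one :: labels one sg = (one :: L1) ++ a :: (M ++ b :: L3)) by (rewrite E; reflexivity).
  destruct (lsplit sg _ _ _ _ E1) as [v1 [v2' [F1 [F2 [F3 F4]]]]].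
  assert (E2 : a :: labels a v2' = (a :: M) ++ b :: L3) by (rewrite <- F4; reflexivity).
  destruct (lsplit v2' _ _ _ _ E2) as [v2 [v3 [G1 [G2 [G3 _]]]]].
  subst v2'.
  destruct (map_eq_app _ _ _ _ F1) as [w1 [w23 [Hw [Hw1 Hw23]]]].
  destruct (map_eq_app _ _ _ _ Hw23) as [w2 [w3 [Hw' [Hw2 Hw3]]]].
  subst u w23.
  rewrite mul1g in F3.
  assert (Ev1 : evalw w1 = a) by (rewrite F3, <- Hw1; reflexivity).
  assert (Ev2 : evalw w2 = prodw v2) by (rewrite <- Hw2; reflexivity).
  assert (Ev2' : prodw v2 = mul (inv a) b) by (rewrite G3, mulA, mulVg, mul1g; reflexivity).
  rewrite !evalw_app, Ev1, Ev2 in Hev.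
  set (P := (map (fun s => (s, true)) u0 : list (letter G))).
  assert (EvP : evalw P = prodw u0).
  { unfold evalw, P. rewrite map_map. simpl. now rewrite map_id. }
  assert (HP : letters_in_S S P).
  { unfold P, letters_in_S. apply Forall_map. exact Hu0f. }
  unfold letters_in_S in Hu. rewrite !Forall_app in Hu. destruct Hu as [Hu1 [Hu2 Hu3]].
  assert (LP : length P = length u0) by (unfold P; apply length_map).
  assert (LPi : length (winv G P) = length u0) by (unfold winv; rewrite length_rev, length_map; exact LP).
  rewrite !length_app in Hn.
  assert (Lw1 : length w1 = length v1) by (rewrite <- Hw1, length_map; reflexivity).
  assert (Lw2 : length w2 = length v2) by (rewrite <- Hw2, length_map; reflexivity).
  simpl in F2, G2.
  set (C1 := w1 ++ P ++ w3). set (C2 := w2 ++ winv G P). set (c := (P ++ w3 : list (letter G))).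
  assert (K1 : conseq_le S R C1 (2 ^ length C1)).
  { apply IH.
    - unfold C1; rewrite !length_app. lia.
    - apply letters_app; auto. apply letters_app; auto.
    - unfold C1. rewrite !evalw_app, Ev1, EvP, Hu0p.
      rewrite <- Hev, G3. rewrite !mulA, mulgV, mul1g. reflexivity. }
  assert (K2 : conseq_le S R C2 (2 ^ length C2)).
  { apply IH.
    - unfold C2; rewrite !length_app. lia.
    - apply letters_app; auto. apply letters_winv; auto.
    - unfold C2. rewrite !evalw_app, evalw_winv, Ev2, EvP, Hu0p, <- Ev2'. apply mulgV. }
  assert (K := conseq_app S R _ _ _ _ K1 (conseq_conj S R _ _ c (letters_app S _ _ HP Hu3) K2)).
  eapply conseq_mono.
  - eapply conseq_freeeq. exact K.
    unfold C1, C2, c. rewrite winv_app.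
    eapply rst_trans.
    { replace ((w1 ++ P ++ w3) ++ (winv G w3 ++ winv G P) ++ (w2 ++ winv G P) ++ P ++ w3)
        with ((w1 ++ P) ++ (w3 ++ winv G w3) ++ (winv G P ++ w2 ++ winv G P ++ P ++ w3)) by lnorm.
      apply freeeq_del. }
    eapply rst_trans.
    { replace ((w1 ++ P) ++ (winv G P ++ w2 ++ winv G P ++ P ++ w3))
        with (w1 ++ (P ++ winv G P) ++ (w2 ++ winv G P ++ P ++ w3)) by lnorm.
      apply freeeq_del. }
    { replace (w1 ++ w2 ++ winv G P ++ P ++ w3)
        with ((w1 ++ w2) ++ (winv G P ++ winv G (winv G P)) ++ w3) by (rewrite winv_inv; lnorm).
      replace (w1 ++ w2 ++ w3) with ((w1 ++ w2) ++ w3) by lnorm.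
      apply freeeq_del. }
  - rewrite !length_app. simpl.
    assert (2 ^ length C1 <= 2 ^ n) by (apply Nat.pow_le_mono_r; [lia| unfold C1; rewrite !length_app; lia]).
    assert (2 ^ length C2 <= 2 ^ n) by (apply Nat.pow_le_mono_r; [lia| unfold C2; rewrite !length_app; lia]).
    replace (length w1 + (length w2 + length w3)) with (Datatypes.S n) by lia. simpl. lia.
Qed.

Fixpoint words {G : group} (lets : list (letter G)) (n : nat) : list (list (letter G)) :=
  match n with
  | 0 => [[]]
  | Datatypes.S n => flat_map (fun a => map (cons a) (words lets n)) lets
  end.

Lemma words_in {G : group} (S : list G) u :
  letters_in_S S u ->
  In u (words (map (fun s => (s, true)) S ++ map (fun s => (s, false)) S) (length u)).
Proof.
  induction u as [|a u IH]; intro H. simpl; auto.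
  inversion H; subst. simpl. apply in_flat_map. exists a. split.
  - destruct a as [s [|]]; apply in_app_iff; [left|right]; apply in_map_iff; exists s; auto.
  - apply in_map. auto.
Qed.

Lemma cfilter {A : Type} (P : A -> Prop) (l : list A) :
  exists l', forall x, In x l' <-> In x l /\ P x.
Proof.
  induction l as [|a l [l' IH]]. exists []. simpl; tauto.
  destruct (classic (P a)).
  - exists (a :: l'). intro x. simpl. rewrite IH. split; [intros [E|E]; subst; tauto | tauto].
  - exists l'. intro x. simpl. rewrite IH. split; [tauto|]. intros [[E|E] HP]; subst; tauto.
Qed.

Lemma finite_R {G : group} (S : list G) N0 : exists R : list (list (letter G)),
  Forall (fun r => letters_in_S S r /\ evalw r = one) R /\
  (forall u, letters_in_S S u -> length u <= N0 -> evalw u = one -> In u R).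
Proof.
  set (lets := map (fun s => (s, true)) S ++ map (fun s => (s, false)) S).
  destruct (cfilter (fun r => letters_in_S S r /\ evalw r = one)
     (flat_map (words lets) (seq 0 (Datatypes.S N0)))) as [R HR].
  exists R. split.
  - apply Forall_forall. intros x Hx. apply HR in Hx. tauto.
  - intros u H1 H2 H3. apply HR. split; auto.
    apply in_flat_map. exists (length u). split. apply in_seq. lia. apply words_in; auto.
Qed.

Theorem theoremA (G : group) (S : list G)
  (HSinv : forall s, In s S -> In (inv s) S)
  (HSgen : forall g : G, exists w : list G, Forall (inS S) w /\ prodw w = g) :
  (forall n, 1 <= n -> Delta_le S n (ceil3 n)) /\
  ((exists N, forall n, 1 <= n -> N <= n ->
        exists k, k < ceil3 n /\ Delta_le S n k) ->
   exists R : list (list (letter G)),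
     (* <S | R> is a finite presentation of G *)
     Forall (fun r => letters_in_S S r /\ evalw r = one) R /\
     (forall u : list (letter G), letters_in_S S u -> evalw u = one ->
        exists m, conseq_le S R u m) /\
     (* exponential isoperimetric inequality *)
     exists c : nat, forall w : list G, Forall (inS S) w -> prodw w = one ->
        conseq_le S R (map (fun s => (s, true)) w) (c ^ length w)).
Proof.
  split. { apply part1; auto. }
  intros [N HN].
  destruct (finite_R S (N + 4)) as [R [HR1 HR2]].
  assert (Hyp : forall n, N + 4 < n -> exists k, 1 <= k /\ 3 * k + 1 <= n /\ Delta_le S n k).
  { intros n Hn. destruct (HN n) as [k [Hk HD]]; try lia.
    pose proof (ceil3_facts n). exists (Nat.max k 1). split. lia. split. lia.
    eapply Delta_mono; eauto. lia. }
  pose proof (key S HSinv R (N + 4) HR2 Hyp) as K.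
  exists R. split; auto. split.
  - intros u Hu He. exists (2 ^ length u). eapply K; eauto.
  - exists 2. intros w Hw He.
    assert (L : length (map (fun s => (s, true)) w : list (letter G)) = length w) by apply length_map.
    rewrite <- L. eapply K; eauto.
    + unfold letters_in_S. apply Forall_map. exact Hw.
    + unfold evalw. rewrite map_map. simpl. rewrite map_id. exact He.
Qed.
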